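(* Let $0<\varpi<2$ and $0\le\beta_s\le1$. Let $X$ be a binary random variable with distribution $(p,1-p)$, $p\in[0,1]$, and let $Y$ be the binary output of the channel with transition matrix $$p(y\mid x)=\begin{pmatrix}1-\beta_s&\beta_s\\ \beta_s&1-\beta_s\end{pmatrix}.$$ Then the message importance loss capacity is $$C(\varpi,\beta_s)=\max_{p\in[0,1]}\big\{L(\varpi,X)-L(\varpi,X\mid Y)\big\}=e^{\varpi/2}-\big(\beta_s e^{\varpi(1-\beta_s)}+(1-\beta_s)e^{\varpi\beta_s}\big),$$ the maximum being attained at the uniform input $p=1/2$.
   Context: For a discrete random variable $X$ with distribution $\{p(x_1),\dots,p(x_n)\}$ the message importance measure (MIM) is $L(\varpi,X)=\sum_i p(x_i)e^{\varpi(1-p(x_i))}$. For a pair $(X,Y)$ with joint law $p(x_i)p(y_j\mid x_i)$, $p(y_j)=\sum_i p(x_i)p(y_j\mid x_i)$ and $p(x_i\mid y_j)=p(x_i)p(y_j\mid x_i)/p(y_j)$, the conditional message importance measure (CMIM) is $L(\varpi,X\mid Y)=\sum_{j:\,p(y_j)>0} p(y_j)\sum_i p(x_i\mid y_j)e^{\varpi(1-p(x_i\mid y_j))}$. For a fixed transition matrix $p(y\mid x)$, the message importance loss capacity (MILC) is $C=\max_{p(x)}\{L(\varpi,X)-L(\varpi,X\mid Y)\}$, the maximum over input distributions. *)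

(* Defs.v *)
From Stdlib Require Import Reals Lra.
Open Scope R_scope.

(* Binary alphabets are indexed by bool: true = x_1 (resp. y_1), false = x_2 (resp. y_2). *)

Definition bsum (f : bool -> R) : R := f true + f false.

Definition MIM (w : R) (px : bool -> R) : R :=
  bsum (fun x => px x * exp (w * (1 - px x))).

Definition out_law (W : bool -> bool -> R) (px : bool -> R) (y : bool) : R :=
  bsum (fun x => px x * W x y).

Definition posterior (W : bool -> bool -> R) (px : bool -> R) (x y : bool) : R :=
  px x * W x y / out_law W px y.

Definition CMIM (w : R) (W : bool -> bool -> R) (px : bool -> R) : R :=
  bsum (fun y =>
    if Rlt_dec 0 (out_law W px y)
    then out_law W px y *
         bsum (fun x => posterior W px x y * exp (w * (1 - posterior W px x y)))
    else 0).

Definition bin_input (p : R) : bool -> R := fun x => if x then p else 1 - p.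

Definition bsc (b : R) : bool -> bool -> R :=
  fun x y => if Bool.eqb x y then 1 - b else b.

Definition mim_loss (w b p : R) : R :=
  MIM w (bin_input p) - CMIM w (bsc b) (bin_input p).

(* Main.v *)
Require Import Defs.
From Stdlib Require Import Reals Lra.
From Coquelicot Require Import Coquelicot.
Open Scope R_scope.

Lemma pade x : 0 <= x -> (2 - x) * exp x <= 2 + x.
Proof.
  intros hx.
  set (F := fun y => (2 + y) * exp (- y) + y).
  assert (HD : forall y, is_derive F y (1 - (1 + y) * exp (- y))).
  { intros y. unfold F. auto_derive; auto. field. }
  destruct (MVT_gen F 0 x (fun y => 1 - (1 + y) * exp (- y))) as [c [hc Hc]].
  - intros y _. apply HD.
  - intros y _. apply continuity_pt_filterlim.
    apply (ex_derive_continuous (V:=R_NormedModule)).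
    eexists; apply HD.
  - rewrite Rmin_left in hc by lra. rewrite Rmax_right in hc by lra.
    unfold F in Hc. rewrite Ropp_0, exp_0 in Hc.
    assert (h1 : (1 + c) * exp (- c) <= 1).
    { pose proof (exp_ineq1_le c). pose proof (exp_pos c).
      rewrite exp_Ropp. apply (Rmult_le_reg_r (exp c)); auto.
      rewrite Rmult_assoc, Rinv_l by lra. lra. }
    assert (h2 : 2 - x <= (2 + x) * exp (- x)) by nra.
    pose proof (exp_pos x).
    rewrite exp_Ropp in h2.
    apply (Rmult_le_compat_r (exp x)) in h2; [|lra].
    rewrite Rmult_assoc, Rinv_l in h2 by lra. lra.
Qed.

Lemma exp_le x y : x <= y -> exp x <= exp y.
Proof. intros [h|h]; [left; apply exp_increasing; auto | subst; lra]. Qed.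

Lemma div_nn a b : 0 <= a -> 0 < b -> 0 <= a / b.
Proof. intros. apply Rmult_le_pos; [auto| left; apply Rinv_0_lt_compat; auto]. Qed.

Definition ch (x : R) : R := (exp x + exp (- x)) / 2.
Definition sg (x : R) : R := exp x / (1 + exp x).
Definition th (x : R) : R := (exp x - 1) / (exp x + 1).
Definition mm (w x : R) : R := x / 2 - w / 2 * th x.
Definition CC (w x : R) : R := ch (mm w x).
Definition cc (x : R) : R := ch (x / 2).
Definition gg (w s : R) : R := s * exp (w * (1 - s)) + (1 - s) * exp (w * s).
Definition Tf (w a c : R) : R := a * exp (w * (c / (a + c))) + c * exp (w * (a / (a + c))).

Lemma ch_even x : ch (- x) = ch x.
Proof. unfold ch. rewrite Ropp_involutive. field. Qed.

Lemma ch_pos x : 0 < ch x.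
Proof. unfold ch. pose proof (exp_pos x). pose proof (exp_pos (-x)). lra. Qed.

Lemma ch_mono u v : 0 <= u -> u <= v -> ch u <= ch v.
Proof.
  intros hu huv. unfold ch. rewrite !exp_Ropp.
  pose proof (exp_le _ _ hu) as h1. rewrite exp_0 in h1.
  pose proof (exp_le _ _ huv) as h2.
  set (A := exp u) in *. set (B := exp v) in *.
  assert (e : (B + / B) / 2 - (A + / A) / 2 = (B - A) * (A * B - 1) / (2 * A * B)).
  { field. split; lra. }
  assert (0 <= (B - A) * (A * B - 1) / (2 * A * B)).
  { unfold Rdiv. apply Rmult_le_pos. apply Rmult_le_pos; nra.
    left. apply Rinv_0_lt_compat. nra. }
  lra.
Qed.

Lemma ch_prod a b : 2 * ch a * ch b = ch (a + b) + ch (a - b).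
Proof.
  unfold ch.
  replace (- (a + b)) with (- a + - b) by field.
  replace (a - b) with (a + - b) by field.
  replace (- (a + - b)) with (- a + b) by field.
  rewrite !exp_plus. field.
Qed.

Lemma ch_incr_diff u v d : 0 <= u -> u <= v -> 0 <= d ->
  ch (u + d) - ch u <= ch (v + d) - ch v.
Proof.
  intros hu huv hd.
  assert (E : forall x, ch (x + d) - ch x = (exp d - 1) / 2 * (exp x - exp (- x - d))).
  { intros x. unfold ch.
    replace (- (x + d)) with (- x - d) by field.
    replace (- x) with ((- x - d) + d) at 2 by field.
    rewrite (exp_plus x d), exp_plus. field. }
  rewrite !E.
  pose proof (exp_le _ _ hd) as h1. rewrite exp_0 in h1.
  pose proof (exp_le _ _ huv).
  assert (exp (- v - d) <= exp (- u - d)) by (apply exp_le; lra).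
  apply Rmult_le_compat_l; lra.
Qed.

Lemma pair_ch x1 x2 y1 y2 : 0 <= y2 -> y2 <= y1 -> y1 <= x1 -> 0 <= x2 ->
  y1 + y2 <= x1 + x2 -> ch y1 + ch y2 <= ch x1 + ch x2.
Proof.
  intros h1 h2 h3 h4 h5.
  destruct (Rle_lt_dec y2 x2) as [h|h].
  - pose proof (ch_mono _ _ (Rle_trans _ _ _ h1 h2) h3).
    pose proof (ch_mono _ _ h1 h). lra.
  - pose proof (ch_incr_diff x2 y1 (x1 - y1) h4 ltac:(lra) ltac:(lra)) as hd.
    replace (y1 + (x1 - y1)) with x1 in hd by field.
    pose proof (ch_mono y2 (x2 + (x1 - y1)) h1 ltac:(lra)). lra.
Qed.

Lemma th_add x y : th (x + y) = (th x + th y) / (1 + th x * th y).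
Proof.
  unfold th. rewrite exp_plus.
  pose proof (exp_pos x). pose proof (exp_pos y).
  field. repeat split; try lra; nra.
Qed.

Lemma th_neg x : th (- x) = - th x.
Proof.
  unfold th. rewrite exp_Ropp. pose proof (exp_pos x). field. split; lra.
Qed.

Lemma th_ge0 x : 0 <= x -> 0 <= th x.
Proof.
  intros hx. unfold th. pose proof (exp_le _ _ hx). rewrite exp_0 in H.
  unfold Rdiv. apply Rmult_le_pos; [lra|]. left; apply Rinv_0_lt_compat; lra.
Qed.

Lemma th_lt1 x : th x < 1.
Proof.
  unfold th. pose proof (exp_pos x).
  apply (Rmult_lt_reg_r (exp x + 1)); [lra|].
  unfold Rdiv. rewrite Rmult_assoc, Rinv_l by lra. lra.
Qed.

Lemma th_le x : 0 <= x -> th x <= x / 2.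
Proof.
  intros hx. pose proof (pade x hx). pose proof (exp_pos x).
  assert (e : th x - x / 2 = ((2 - x) * exp x - (2 + x)) / (2 * (exp x + 1))).
  { unfold th. field. lra. }
  assert (((2 - x) * exp x - (2 + x)) / (2 * (exp x + 1)) <= 0).
  { unfold Rdiv. assert (0 < / (2 * (exp x + 1))) by (apply Rinv_0_lt_compat; lra). nra. }
  lra.
Qed.

Section W.
Variable w : R.
Hypothesis hw : 0 < w < 2.

Lemma mm_neg x : mm w (- x) = - mm w x.
Proof. unfold mm. rewrite th_neg. field. Qed.

Lemma CC_even x : CC w (- x) = CC w x.
Proof. unfold CC. rewrite mm_neg, ch_even. reflexivity. Qed.

Lemma mm_bounds x : 0 <= x -> 0 <= mm w x <= x / 2.
Proof.
  intros hx. pose proof (th_ge0 x hx). pose proof (th_le x hx).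
  unfold mm. split; nra.
Qed.

Lemma mm_super t k : 0 <= t -> 0 <= k -> mm w t + mm w k <= mm w (t + k).
Proof.
  intros ht hk. unfold mm. rewrite th_add.
  pose proof (th_ge0 t ht). pose proof (th_ge0 k hk).
  set (A := th t) in *. set (B := th k) in *.
  assert ((A + B) / (1 + A * B) <= A + B).
  { assert (e : A + B - (A + B) / (1 + A * B) = (A + B) * (A * B) / (1 + A * B)).
    { field. nra. }
    assert (0 <= (A + B) * (A * B) / (1 + A * B)).
    { unfold Rdiv. apply Rmult_le_pos. apply Rmult_le_pos; nra.
      left; apply Rinv_0_lt_compat; nra. }
    lra. }
  nra.
Qed.

Lemma mm_conv t k : 0 <= k -> k <= t -> 2 * mm w t <= mm w (t + k) + mm w (t - k).
Proof.
  intros hk hkt. unfold mm.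
  replace (t - k) with (t + - k) by field.
  rewrite !th_add, th_neg.
  pose proof (th_ge0 t ltac:(lra)). pose proof (th_ge0 k hk).
  pose proof (th_lt1 t). pose proof (th_lt1 k).
  set (A := th t) in *. set (B := th k) in *.
  assert (e : 2 * A - ((A + B) / (1 + A * B) + (A + - B) / (1 + A * - B))
              = 2 * A * (B * B) * (1 - A * A) / ((1 + A * B) * (1 - A * B))).
  { field. split; nra. }
  assert (0 <= 2 * A * (B * B) * (1 - A * A) / ((1 + A * B) * (1 - A * B))).
  { assert (A * B <= A) by nra. assert (0 <= A * B) by nra.
    apply div_nn; [|nra]. assert (0 <= 1 - A * A) by nra.
    assert (0 <= B * B) by nra. assert (0 <= 2 * A * (B * B)) by nra. nra. }
  nra.
Qed.

Lemma CC_le x : CC w x <= cc x.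
Proof.
  unfold CC, cc.
  destruct (Rle_lt_dec 0 x) as [h|h].
  - pose proof (mm_bounds x h). apply ch_mono; lra.
  - pose proof (mm_bounds (- x) ltac:(lra)). rewrite mm_neg in H.
    rewrite <- (ch_even (mm w x)), <- (ch_even (x / 2)).
    apply ch_mono; lra.
Qed.

Lemma C3_pos t k : 0 <= k -> k <= t -> 2 * CC w t * CC w k <= CC w (t + k) + CC w (t - k).
Proof.
  intros hk hkt. unfold CC. rewrite ch_prod.
  pose proof (mm_bounds t ltac:(lra)). pose proof (mm_bounds k hk).
  pose proof (mm_bounds (t - k) ltac:(lra)).
  pose proof (mm_super t k ltac:(lra) hk).
  pose proof (mm_super k (t - k) hk ltac:(lra)). replace (k + (t - k)) with t in H3 by field.
  pose proof (mm_conv t k hk hkt).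
  apply pair_ch; lra.
Qed.

Lemma C3_nn t k : 0 <= k -> 0 <= t -> 2 * CC w t * CC w k <= CC w (t + k) + CC w (t - k).
Proof.
  intros hk ht. destruct (Rle_lt_dec k t) as [h|h].
  - apply C3_pos; lra.
  - pose proof (C3_pos k t ht ltac:(lra)).
    replace (k + t) with (t + k) in H by field.
    replace (k - t) with (- (t - k)) in H by field. rewrite CC_even in H. lra.
Qed.

Lemma C3 t k : 2 * CC w t * CC w k <= CC w (t + k) + CC w (t - k).
Proof.
  assert (Hk : forall t, 0 <= t -> 2 * CC w t * CC w k <= CC w (t + k) + CC w (t - k)).
  { intros t' ht. destruct (Rle_lt_dec 0 k) as [h|h].
    - apply C3_nn; lra.
    - pose proof (C3_nn t' (- k) ltac:(lra) ht). rewrite CC_even in H.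
      replace (t' + - k) with (t' - k) in H by field.
      replace (t' - - k) with (t' + k) in H by field. lra. }
  destruct (Rle_lt_dec 0 t) as [h|h].
  - apply Hk; lra.
  - pose proof (Hk (- t) ltac:(lra)). rewrite CC_even in H.
    replace (- t + k) with (- (t - k)) in H by field.
    replace (- t - k) with (- (t + k)) in H by field. rewrite !CC_even in H. lra.
Qed.

Lemma core t k : 2 * CC w t * cc k + 2 * CC w k * cc t <= 2 * cc t * cc k + CC w (t - k) + CC w (t + k).
Proof.
  pose proof (C3 t k). pose proof (CC_le t). pose proof (CC_le k).
  assert (0 <= (cc t - CC w t) * (cc k - CC w k)) by (apply Rmult_le_pos; lra).
  nra.
Qed.

End W.

Lemma exp_half2 x : exp x = exp (x / 2) * exp (x / 2).
Proof. rewrite <- exp_plus. f_equal. field. Qed.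

Lemma sg_bounds x : 0 < sg x < 1.
Proof.
  unfold sg. pose proof (exp_pos x). split.
  - apply Rmult_lt_0_compat; [lra|]. apply Rinv_0_lt_compat; lra.
  - apply (Rmult_lt_reg_r (1 + exp x)); [lra|].
    unfold Rdiv. rewrite Rmult_assoc, Rinv_l by lra. lra.
Qed.

Lemma sg_surj s : 0 < s < 1 -> exists t, sg t = s.
Proof.
  intros hs. exists (ln (s / (1 - s))). unfold sg.
  rewrite exp_ln; [field; repeat split; lra|].
  apply Rmult_lt_0_compat; [lra|]. apply Rinv_0_lt_compat; lra.
Qed.

Lemma cc_pos x : 0 < cc x.
Proof. apply ch_pos. Qed.

Lemma G1aux X E1 E2 : 0 < X ->
  X * X / (1 + X * X) * E1 + (1 - X * X / (1 + X * X)) * E2 =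
  (X * E1 + / X * E2) / 2 / ((X + / X) / 2).
Proof.
  intros hX. field. split; [lra|nra].
Qed.

Lemma G1 w x : gg w (sg x) = exp (w / 2) * CC w x / cc x.
Proof.
  assert (Hth : th x = 2 * sg x - 1).
  { unfold th, sg. pose proof (exp_pos x). field; repeat split; lra. }
  unfold gg, CC, cc, ch, mm. rewrite Hth.
  assert (e1 : exp (w / 2) * exp (x / 2 - w / 2 * (2 * sg x - 1)) = exp (x / 2) * exp (w * (1 - sg x))).
  { rewrite <- !exp_plus. f_equal. field. }
  assert (e2 : exp (w / 2) * exp (- (x / 2 - w / 2 * (2 * sg x - 1))) = exp (- (x / 2)) * exp (w * sg x)).
  { rewrite <- !exp_plus. f_equal. field. }
  replace (exp (w / 2) * ((exp (x / 2 - w / 2 * (2 * sg x - 1)) + exp (- (x / 2 - w / 2 * (2 * sg x - 1)))) / 2))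
    with ((exp (w / 2) * exp (x / 2 - w / 2 * (2 * sg x - 1)) + exp (w / 2) * exp (- (x / 2 - w / 2 * (2 * sg x - 1)))) / 2) by field.
  rewrite e1, e2.
  generalize (exp (w * (1 - sg x))) (exp (w * sg x)). intros E1 E2.
  unfold sg. rewrite (exp_half2 x), exp_Ropp.
  apply G1aux. apply exp_pos.
Qed.

Lemma exps t k :
  exp t = exp (t/2) * exp (t/2) /\ exp k = exp (k/2) * exp (k/2) /\
  exp (t - k) = exp (t/2) * exp (t/2) / (exp (k/2) * exp (k/2)) /\
  exp (t + k) = exp (t/2) * exp (t/2) * (exp (k/2) * exp (k/2)) /\
  exp ((t - k)/2) = exp (t/2) / exp (k/2) /\
  exp (- ((t - k)/2)) = exp (k/2) / exp (t/2) /\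
  exp ((t + k)/2) = exp (t/2) * exp (k/2) /\
  exp (- ((t + k)/2)) = / (exp (t/2) * exp (k/2)) /\
  exp (- (t/2)) = / exp (t/2) /\ exp (- (k/2)) = / exp (k/2).
Proof.
  pose proof (exp_pos (t/2)). pose proof (exp_pos (k/2)).
  repeat split.
  - apply exp_half2.
  - apply exp_half2.
  - replace (t - k) with (t/2 + t/2 + - (k/2 + k/2)) by field.
    rewrite !exp_plus, exp_Ropp, exp_plus. field. lra.
  - replace (t + k) with (t/2 + t/2 + (k/2 + k/2)) by field.
    rewrite !exp_plus. field.
  - replace ((t - k)/2) with (t/2 + - (k/2)) by field.
    rewrite exp_plus, exp_Ropp. field. lra.
  - replace (- ((t - k)/2)) with (k/2 + - (t/2)) by field.
    rewrite exp_plus, exp_Ropp. field. lra.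
  - replace ((t + k)/2) with (t/2 + k/2) by field. apply exp_plus.
  - replace (- ((t + k)/2)) with (- (t/2 + k/2)) by field.
    rewrite exp_Ropp, exp_plus. reflexivity.
  - apply exp_Ropp.
  - apply exp_Ropp.
Qed.

Ltac expsub t k :=
  let h := fresh in
  destruct (exps t k) as (h1 & h2 & h3 & h4 & h5 & h6 & h7 & h8 & h9 & h10);
  unfold sg, cc, ch;
  rewrite ?h3, ?h4, ?h5, ?h6, ?h7, ?h8, ?h9, ?h10, ?h1, ?h2;
  pose proof (exp_pos (t/2)); pose proof (exp_pos (k/2));
  set (X := exp (t/2)) in *; set (Y := exp (k/2)) in *.

Lemma G2a t k : sg t * (1 - sg k) + (1 - sg t) * sg k = cc (t - k) / (2 * cc t * cc k).
Proof.
  expsub t k. field. repeat split; try lra; nra.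
Qed.

Lemma G2b t k : sg t * sg k + (1 - sg t) * (1 - sg k) = cc (t + k) / (2 * cc t * cc k).
Proof.
  expsub t k. field. repeat split; try lra; nra.
Qed.

Lemma G3a t k : sg t * (1 - sg k) / (sg t * (1 - sg k) + (1 - sg t) * sg k) = sg (t - k).
Proof.
  expsub t k. field. repeat split; try lra; nra.
Qed.

Lemma G3b t k : sg t * sg k / (sg t * sg k + (1 - sg t) * (1 - sg k)) = sg (t + k).
Proof.
  expsub t k. field. repeat split; try lra; nra.
Qed.

Lemma Tlem w a c : 0 < a + c -> Tf w a c = (a + c) * gg w (a / (a + c)).
Proof.
  intros h. unfold Tf, gg.
  replace (1 - a / (a + c)) with (c / (a + c)) by (field; lra).
  field. lra.
Qed.

Lemma Tf_0l w c : Tf w 0 c = c.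
Proof. unfold Tf. rewrite Rdiv_0_l, Rmult_0_r, exp_0. field. Qed.

Lemma Tf_0r w a : Tf w a 0 = a.
Proof. unfold Tf. rewrite Rdiv_0_l, Rmult_0_r, exp_0. field. Qed.

Lemma term_if w a c : 0 <= a -> 0 <= c ->
  (if Rlt_dec 0 (a + c) then (a + c) * (a / (a + c) * exp (w * (1 - a / (a + c))) +
     c / (a + c) * exp (w * (1 - c / (a + c)))) else 0) = Tf w a c.
Proof.
  intros ha hc. destruct (Rlt_dec 0 (a + c)) as [h|h].
  - unfold Tf.
    replace (1 - a / (a + c)) with (c / (a + c)) by (field; lra).
    replace (1 - c / (a + c)) with (a / (a + c)) by (field; lra).
    field. lra.
  - assert (a = 0) by lra. assert (c = 0) by lra. subst.
    rewrite Tf_0l. reflexivity.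
Qed.

Lemma loss_eq w b p : 0 <= p <= 1 -> 0 <= b <= 1 ->
  mim_loss w b p = gg w p - (Tf w (p * (1 - b)) ((1 - p) * b) + Tf w (p * b) ((1 - p) * (1 - b))).
Proof.
  intros hp hb.
  unfold mim_loss, MIM, CMIM, posterior, out_law, bsum, bin_input, bsc. simpl.
  rewrite !term_if by nra. unfold gg.
  replace (1 - (1 - p)) with p by field. reflexivity.
Qed.

Lemma interior w t k : 0 < w < 2 ->
  gg w (sg t) - (Tf w (sg t * (1 - sg k)) ((1 - sg t) * sg k) +
                 Tf w (sg t * sg k) ((1 - sg t) * (1 - sg k))) <= exp (w / 2) - gg w (sg k).
Proof.
  intros hw.
  pose proof (sg_bounds t). pose proof (sg_bounds k).
  rewrite (Tlem w (sg t * (1 - sg k))) by nra.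
  rewrite (Tlem w (sg t * sg k)) by nra.
  rewrite G3a, G3b, G2a, G2b, !G1.
  pose proof (core w hw t k).
  pose proof (cc_pos t). pose proof (cc_pos k). pose proof (cc_pos (t - k)). pose proof (cc_pos (t + k)).
  pose proof (exp_pos (w / 2)).
  set (E := exp (w / 2)) in *.
  set (ct := cc t) in *. set (ck := cc k) in *.
  set (c1 := cc (t - k)) in *. set (c2 := cc (t + k)) in *.
  set (Ct := CC w t) in *. set (Ck := CC w k) in *.
  set (C1 := CC w (t - k)) in *. set (C2 := CC w (t + k)) in *.
  assert (e : E - E * Ck / ck - (E * Ct / ct - (c1 / (2 * ct * ck) * (E * C1 / c1) + c2 / (2 * ct * ck) * (E * C2 / c2)))
     = E / (2 * ct * ck) * (2 * ct * ck + C1 + C2 - 2 * Ct * ck - 2 * Ck * ct)).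
  { field. repeat split; lra. }
  assert (0 <= E / (2 * ct * ck) * (2 * ct * ck + C1 + C2 - 2 * Ct * ck - 2 * Ck * ct)).
  { apply Rmult_le_pos; [apply div_nn; nra | lra]. }
  lra.
Qed.

Lemma Gmax w s : 0 < w < 2 -> 0 <= s <= 1 -> gg w s <= exp (w / 2).
Proof.
  intros hw hs.
  assert (h1 : 1 <= exp (w / 2)) by (rewrite <- exp_0; apply exp_le; lra).
  destruct (Req_dec s 0) as [h|h].
  { subst. unfold gg. rewrite Rmult_0_r, exp_0. lra. }
  destruct (Req_dec s 1) as [h'|h'].
  { subst. unfold gg. replace (w * (1 - 1)) with 0 by field. rewrite exp_0. lra. }
  destruct (sg_surj s ltac:(lra)) as [t ht]. subst s.
  rewrite G1. pose proof (CC_le w hw t). pose proof (cc_pos t). pose proof (exp_pos (w/2)).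
  assert (e : exp (w / 2) * CC w t / cc t = exp (w / 2) - exp (w / 2) * (cc t - CC w t) / cc t)
    by (field; lra).
  assert (0 <= exp (w / 2) * (cc t - CC w t) / cc t) by (apply div_nn; nra).
  lra.
Qed.

Theorem proposition1 (w b : R) (hw : 0 < w < 2) (hb : 0 <= b <= 1) :
  (forall p : R, 0 <= p <= 1 ->
     mim_loss w b p <= exp (w / 2) - (b * exp (w * (1 - b)) + (1 - b) * exp (w * b)))
  /\ mim_loss w b (1 / 2) =
     exp (w / 2) - (b * exp (w * (1 - b)) + (1 - b) * exp (w * b)).
Proof.
  change (b * exp (w * (1 - b)) + (1 - b) * exp (w * b)) with (gg w b).
  split.
  - intros p hp. rewrite loss_eq by lra.
    pose proof (Gmax w b hw hb) as Gb. pose proof (Gmax w p hw hp) as Gp.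
    destruct (Req_dec p 0) as [h|h].
    { subst. replace (0 * (1 - b)) with 0 by field. replace (0 * b) with 0 by field.
      rewrite !Tf_0l. unfold gg at 1. rewrite Rmult_0_r, exp_0. lra. }
    destruct (Req_dec p 1) as [h'|h'].
    { subst. replace ((1 - 1) * b) with 0 by field. replace ((1 - 1) * (1 - b)) with 0 by field.
      rewrite !Tf_0r. unfold gg at 1. replace (w * (1 - 1)) with 0 by field. rewrite exp_0. lra. }
    destruct (Req_dec b 0) as [hb0|hb0].
    { subst. replace ((1 - p) * 0) with 0 by field. replace (p * 0) with 0 by field.
      rewrite Tf_0r, Tf_0l. unfold gg at 2. rewrite Rmult_0_r, exp_0. lra. }
    destruct (Req_dec b 1) as [hb1|hb1].
    { subst. replace (p * (1 - 1)) with 0 by field. replace ((1 - p) * (1 - 1)) with 0 by field.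
      rewrite Tf_0l, Tf_0r. unfold gg at 2. replace (w * (1 - 1)) with 0 by field. rewrite exp_0. lra. }
    destruct (sg_surj p ltac:(lra)) as [t ht]. subst p.
    destruct (sg_surj b ltac:(lra)) as [k hk]. subst b.
    apply interior; auto.
  - rewrite loss_eq by lra. unfold Tf, gg.
    replace (1 / 2 * (1 - b) + (1 - 1 / 2) * b) with (1 / 2) by field.
    replace (1 / 2 * b + (1 - 1 / 2) * (1 - b)) with (1 / 2) by field.
    replace (w * ((1 - 1 / 2) * b / (1 / 2))) with (w * b) by field.
    replace (w * (1 / 2 * (1 - b) / (1 / 2))) with (w * (1 - b)) by field.
    replace (w * (1 / 2 * b / (1 / 2))) with (w * b) by field.
    replace (w * ((1 - 1 / 2) * (1 - b) / (1 / 2))) with (w * (1 - b)) by field.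
    replace (w * (1 - 1 / 2)) with (w / 2) by field.
    replace (w * (1 / 2)) with (w / 2) by field.
    field.
Qed.
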